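(* For every integer $r\ge0$, \[ \sum_{n=1}^{\infty}\frac{h_n^{(r)}}{n(n+1)\cdots(n+r)}=\frac{\pi^2}{6\,r!}, \] equivalently $\sum_{n=1}^{\infty}h_n^{(r)}B(r+1,n)=\pi^2/6$.
   Context: Hyperharmonic numbers: $h_n^{(0)}=1/n$ for $n\ge1$, and for $r\ge1$, $h_n^{(r)}=\sum_{j=1}^{n}h_j^{(r-1)}$. $B(x,y)=\int_0^1t^{x-1}(1-t)^{y-1}\,dt$ is the Beta function. *)

(* Defs.v *)
From Stdlib Require Import Reals.
Open Scope R_scope.

(* Hyperharmonic numbers h_n^{(r)} for n >= 1:
   h_n^{(0)} = 1/n, h_n^{(r)} = sum_{j=1}^n h_j^{(r-1)}.
   At the (unused) index n = 0 we set the value to 0, which is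
   consistent with the empty sum for r >= 1. *)
Fixpoint hyperharmonic (r n : nat) : R :=
  match r with
  | O => match n with O => 0 | S _ => / INR n end
  | S r' =>
      (fix partial (m : nat) : R :=
         match m with
         | O => 0
         | S m' => partial m' + hyperharmonic r' (S m')
         end) n
  end.

Fixpoint rising_prod (n r : nat) : R :=
  match r with
  | O => INR n
  | S r' => rising_prod n r' * INR (n + S r')
  end.

(* Main.v *)
From Stdlib Require Import Reals Lra Lia.
From Coquelicot Require Import Coquelicot.
Require Import Defs.
Open Scope R_scope.

Fixpoint sumn (g : nat -> R) (n : nat) : R :=
  match n with O => 0 | S m => sumn g m + g m end.

Lemma sumn_ext (g h : nat -> R) n :
  (forall k, (k < n)%nat -> g k = h k) -> sumn g n = sumn h n.
Proof.
  induction n; simpl; intros H; auto.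
  rewrite IHn by (intros; apply H; lia). rewrite H by lia. auto.
Qed.

Lemma sumn_split (g : nat -> R) n m :
  sumn g (n + m) = sumn g n + sumn (fun k => g (n + k)%nat) m.
Proof.
  induction m; simpl.
  - rewrite Nat.add_0_r. ring.
  - rewrite Nat.add_succ_r. simpl. rewrite IHm. ring.
Qed.

Lemma sumn_rev (g : nat -> R) n :
  sumn g n = sumn (fun k => g (n - 1 - k)%nat) n.
Proof.
  induction n; [reflexivity|].
  replace (sumn (fun k => g (S n - 1 - k)%nat) (S n))
    with (sumn (fun k => g (S n - 1 - k)%nat) (1 + n)) by (f_equal; lia).
  rewrite sumn_split. simpl sumn at 1. simpl sumn at 2.
  rewrite IHn.
  rewrite (sumn_ext (fun k => g (n - 1 - k)%nat) (fun k => g (S n - 1 - (1 + k))%nat)).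
  - replace (n - 0 - 0)%nat with n by lia. ring.
  - intros; f_equal; lia.
Qed.

Lemma sumn_plus (g h : nat -> R) n : sumn (fun k => g k + h k) n = sumn g n + sumn h n.
Proof. induction n; simpl; [ring | rewrite IHn; ring]. Qed.

Lemma sumn_scal (c : R) (g : nat -> R) n : sumn (fun k => c * g k) n = c * sumn g n.
Proof. induction n; simpl; [ring | rewrite IHn; ring]. Qed.

Lemma sumn_le (g h : nat -> R) n :
  (forall k, (k < n)%nat -> g k <= h k) -> sumn g n <= sumn h n.
Proof.
  induction n; simpl; intros H; [lra|].
  assert (sumn g n <= sumn h n) by (apply IHn; intros; apply H; lia).
  assert (g n <= h n) by (apply H; lia). lra.
Qed.

Lemma sumn_const c n : sumn (fun _ => c) n = INR n * c.
Proof. induction n; simpl sumn; [simpl; ring|rewrite IHn, S_INR; ring]. Qed.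

Lemma sumn_mono (g : nat -> R) n m :
  (forall k, 0 <= g k) -> (n <= m)%nat -> sumn g n <= sumn g m.
Proof.
  intros Hg Hnm. replace m with (n + (m - n))%nat by lia.
  rewrite sumn_split.
  assert (0 <= sumn (fun k => g (n + k)%nat) (m - n)).
  { rewrite <- (Rmult_0_r (INR (m-n))), <- sumn_const. apply sumn_le. intros; apply Hg. }
  lra.
Qed.

Lemma sum_f_R0_sumn g n : sum_f_R0 g n = sumn g (S n).
Proof. induction n; simpl; [ring | simpl in IHn; rewrite IHn; ring]. Qed.

Lemma x_lt_tan x : 0 < x < PI / 2 -> x < tan x.
Proof.
  intros [H0 H1].
  destruct (MVT_cor2 tan (fun c => 1 + tan c ^ 2) 0 x H0) as [c [Hc1 Hc2]].
  { intros c Hc. apply is_derive_Reals.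
    assert (0 < cos c) by (apply cos_gt_0; lra).
    unfold tan. auto_derive; [lra|]. field. lra. }
  rewrite tan_0 in Hc1.
  assert (0 < tan c) by (apply tan_gt_0; lra).
  assert (0 < tan c ^ 2 * x) by (apply Rmult_lt_0_compat; [apply pow_lt|]; lra).
  lra.
Qed.
Definition ff (t : R) : R := / (sin (PI * t)) ^ 2.
Definition pt (N k : nat) : R := INR (2 * k + 1) / (4 * INR (2 ^ N)).
Definition TT (N : nat) : R := sumn (fun k => ff (pt N k)) (2 ^ N).

Lemma pow2_pos N : 0 < INR (2 ^ N).
Proof. apply lt_0_INR. apply Nat.neq_0_lt_0. apply Nat.pow_nonzero. lia. Qed.

Lemma pow2_S N : INR (2 ^ S N) = 2 * INR (2 ^ N).
Proof. rewrite Nat.pow_succ_r', mult_INR. simpl. ring. Qed.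

Lemma pt_bounds N k : (k < 2 ^ N)%nat -> 0 < PI * pt N k < PI / 2.
Proof.
  intros Hk. unfold pt. pose proof (pow2_pos N). pose proof PI_RGT_0.
  assert (H1: INR (2 * k + 1) < 2 * INR (2 ^ N)).
  { assert (H3: INR (2 * k + 1) < INR (2 * 2 ^ N)) by (apply lt_INR; lia).
    rewrite mult_INR in H3. replace (INR 2) with 2 in H3 by (simpl; ring). exact H3. }
  assert (H2: 0 < INR (2 * k + 1)) by (apply lt_0_INR; lia).
  split.
  - apply Rmult_lt_0_compat; [lra|]. apply Rdiv_lt_0_compat; lra.
  - apply Rmult_lt_reg_r with (4 * INR (2 ^ N) / PI).
    + apply Rdiv_lt_0_compat; lra.
    + field_simplify; try lra. 
Qed.

Lemma ff_double N k : (k < 2 ^ N)%nat ->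
  ff (pt N k) = / 4 * (ff (pt (S N) k) + ff (pt (S N) (2 * 2 ^ N - 1 - k))).
Proof.
  intros Hk.
  assert (Hk' : (k < 2 ^ S N)%nat) by (rewrite Nat.pow_succ_r'; lia).
  destruct (pt_bounds (S N) k Hk') as [Hy1 Hy2].
  set (y := PI * pt (S N) k) in *.
  pose proof (pow2_pos N).
  assert (E1 : PI * pt N k = 2 * y).
  { unfold y, pt. rewrite pow2_S. field. lra. }
  assert (E2 : PI * pt (S N) (2 * 2 ^ N - 1 - k) = PI / 2 - y).
  { unfold y, pt. rewrite pow2_S.
    assert (INR (2 * (2 * 2 ^ N - 1 - k) + 1) = 4 * INR (2 ^ N) - INR (2 * k + 1)).
    { assert (Hn : (2 * (2 * 2 ^ N - 1 - k) + 1 + (2 * k + 1) = 4 * 2 ^ N)%nat) by lia.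
      apply (f_equal INR) in Hn. rewrite plus_INR, mult_INR in Hn.
      replace (INR 4) with 4 in Hn by (simpl; ring). lra. }
    rewrite H0. field. lra. }
  unfold ff. rewrite E1, E2, sin_2a, sin_shift.
  assert (0 < sin y) by (apply sin_gt_0; lra).
  assert (0 < cos y) by (apply cos_gt_0; lra).
  pose proof (sin2_cos2 y) as Hsc. unfold Rsqr in Hsc.
  replace (/ (2 * sin y * cos y) ^ 2) with ((sin y * sin y + cos y * cos y) / (4 * (sin y ^ 2 * cos y ^2)))
    by (rewrite Hsc; field; lra).
  change (PI * pt (S N) k) with y. field. lra.
Qed.

Lemma TT_S N : TT N = / 4 * TT (S N).
Proof.
  unfold TT. set (n := (2 ^ N)%nat).
  rewrite (sumn_ext _ (fun k => / 4 * (ff (pt (S N) k) + ff (pt (S N) (2 * n - 1 - k))))).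
  2: { intros; apply ff_double; auto. }
  rewrite sumn_scal, sumn_plus. f_equal.
  replace (2 ^ S N)%nat with (n + n)%nat by (unfold n; rewrite Nat.pow_succ_r'; lia).
  rewrite sumn_split. f_equal.
  rewrite sumn_rev. apply sumn_ext. intros k Hk. f_equal. f_equal. lia.
Qed.

Lemma TT_0 : TT 0 = 2.
Proof.
  unfold TT, ff, pt. simpl sumn.
  match goal with |- context [sin ?a] => replace a with (PI / 4) by (simpl; field) end.
  rewrite sin_PI4. pose proof (sqrt_sqrt 2). pose proof (sqrt_lt_R0 2).
  replace (1 / sqrt 2 * (1 / sqrt 2 * 1)) with (/ (sqrt 2 * sqrt 2)) by (field; lra).
  rewrite H by lra. field.
Qed.

Lemma TT_val N : TT N = 2 * INR (2 ^ N) ^ 2.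
Proof.
  induction N.
  - rewrite TT_0. simpl. ring.
  - assert (TT (S N) = 4 * TT N) by (rewrite (TT_S N); field).
    rewrite H, IHN, pow2_S. ring.
Qed.

Definition OO (m : nat) : R := sumn (fun k => / INR (2 * k + 1) ^ 2) m.

Lemma OO_bounds N :
  PI ^ 2 / 8 - PI ^ 2 / (16 * INR (2 ^ N)) <= OO (2 ^ N) <= PI ^ 2 / 8.
Proof.
  pose proof (pow2_pos N) as Hn. pose proof PI_RGT_0.
  set (n := INR (2 ^ N)) in *.
  assert (Hx : forall k, (k < 2 ^ N)%nat ->
     ff (pt N k) - 1 <= 16 * n ^ 2 / PI ^ 2 * / INR (2 * k + 1) ^ 2 <= ff (pt N k)).
  { intros k Hk. destruct (pt_bounds N k Hk) as [H1 H2].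
    set (x := PI * pt N k) in *.
    assert (E : 16 * n ^ 2 / PI ^ 2 * / INR (2 * k + 1) ^ 2 = / x ^ 2).
    { unfold x, pt. fold n. assert (0 < INR (2 * k + 1)) by (apply lt_0_INR; lia).
      field. lra. }
    rewrite E. unfold ff. fold x.
    assert (0 < sin x) by (apply sin_gt_0; lra).
    assert (0 < cos x) by (apply cos_gt_0; lra).
    pose proof (sin_lt_x x H1). pose proof (x_lt_tan x (conj H1 H2)).
    unfold tan in H5.
    split.
    - pose proof (sin2_cos2 x) as Hsc. unfold Rsqr in Hsc.
      assert (x * cos x < sin x).
      { apply Rmult_lt_reg_r with (/ cos x). apply Rinv_0_lt_compat; lra.
        field_simplify; lra. }
      assert (/ sin x ^ 2 - 1 = (cos x / sin x) ^ 2).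
      { field_simplify; try lra. replace (cos x ^ 2) with (1 - sin x ^ 2) by nra. field. lra. }
      rewrite H7. replace (/ x ^ 2) with ((/ x) ^ 2) by (field; lra).
      replace (cos x / sin x) with (/ (sin x / cos x)) by (field; lra).
      assert (0 < / (sin x / cos x) < / x).
      { split. apply Rinv_0_lt_compat. apply Rdiv_lt_0_compat; lra.
        apply Rinv_lt_contravar; nra. }
      nra.
    - replace (/ x ^ 2) with ((/ x) ^ 2) by (field; lra).
      replace (/ sin x ^ 2) with ((/ sin x) ^ 2) by (field; lra).
      assert (0 < / x < / sin x).
      { split. apply Rinv_0_lt_compat. lra.
        apply Rinv_lt_contravar; nra. }
      nra. }
  assert (S1 : sumn (fun k => ff (pt N k) - 1) (2 ^ N) <=
               sumn (fun k => 16 * n ^ 2 / PI ^ 2 * / INR (2 * k + 1) ^ 2) (2 ^ N)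
               <= TT N).
  { split; apply sumn_le; intros; apply Hx; auto. }
  rewrite sumn_scal in S1. fold (OO (2 ^ N)) in S1.
  replace (sumn (fun k => ff (pt N k) - 1) (2 ^ N)) with (TT N - n) in S1.
  2: { unfold TT. rewrite <- (sumn_ext (fun k => ff (pt N k) + (-1) * 1) (fun k => ff (pt N k) - 1)).
       2: intros; ring. rewrite sumn_plus, sumn_scal, sumn_const. fold n. ring. }
  rewrite TT_val in S1. fold n in S1.
  destruct S1 as [S1 S2]. split.
  - apply Rmult_le_reg_l with (16 * n ^ 2 / PI ^ 2).
    { apply Rdiv_lt_0_compat. nra. nra. }
    apply Rle_trans with (2 * n ^ 2 - n); [|lra]. right. field. split; lra.
  - apply Rmult_le_reg_l with (16 * n ^ 2 / PI ^ 2).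
    { apply Rdiv_lt_0_compat. nra. nra. }
    apply Rle_trans with (2 * n ^ 2); [lra|]. right. field. lra.
Qed.

Lemma sumn_S g n : sumn g (S n) = sumn g n + g n.
Proof. reflexivity. Qed.

Lemma OO_mono m1 m2 : (m1 <= m2)%nat -> OO m1 <= OO m2.
Proof.
  intros; unfold OO; apply sumn_mono; auto.
  intros k. apply Rlt_le, Rinv_0_lt_compat, pow_lt, lt_0_INR; lia.
Qed.

Lemma OO_cv : Un_cv OO (PI ^ 2 / 8).
Proof.
  intros eps Heps. pose proof PI_RGT_0.
  destruct (INR_unbounded (PI ^ 2 / (16 * eps))) as [N HN].
  exists (2 ^ N)%nat. intros m Hm. unfold Rdist.
  assert (HN2 : INR N < INR (2 ^ N)) by (apply lt_INR, Nat.pow_gt_lin_r; lia).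
  pose proof (pow2_pos N).
  destruct (OO_bounds N) as [B1 _].
  destruct (OO_bounds m) as [_ B2].
  assert (OO (2 ^ N) <= OO m) by (apply OO_mono; lia).
  assert (OO m <= OO (2 ^ m)) by (apply OO_mono; apply Nat.lt_le_incl, Nat.pow_gt_lin_r; lia).
  assert (PI ^ 2 / (16 * INR (2 ^ N)) < eps).
  { apply Rmult_lt_reg_r with (16 * INR (2 ^ N) / eps).
    apply Rdiv_lt_0_compat; lra.
    replace (PI ^ 2 / (16 * INR (2 ^ N)) * (16 * INR (2 ^ N) / eps)) with (PI ^ 2 / eps) by (field; lra).
    replace (eps * (16 * INR (2 ^ N) / eps)) with (16 * INR (2 ^ N)) by (field; lra).
    assert (PI ^ 2 / eps = 16 * (PI ^ 2 / (16 * eps))) by (field; lra). lra. }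
  rewrite Rabs_left1; lra.
Qed.

Definition ZZ (m : nat) : R := sumn (fun j => / INR (j + 1) ^ 2) m.

Lemma ZZ_double m : ZZ (2 * m) = OO m + / 4 * ZZ m.
Proof.
  induction m.
  - unfold ZZ, OO. simpl. ring.
  - replace (2 * S m)%nat with (S (S (2 * m))) by lia.
    unfold ZZ, OO in *. rewrite !sumn_S. rewrite IHm.
    replace (S (2 * m) + 1)%nat with (2 * (m + 1))%nat by lia.
    replace (2 * m + 1)%nat with (2 * m + 1)%nat by lia.
    rewrite (mult_INR 2 (m + 1)). replace (INR 2) with 2 by (simpl; ring).
    assert (0 < INR (m + 1)) by (apply lt_0_INR; lia).
    assert (0 < INR (2 * m + 1)) by (apply lt_0_INR; lia).
    field. lra.
Qed.

Lemma ZZ_nonneg_term j : 0 <= / INR (j + 1) ^ 2.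
Proof. apply Rlt_le, Rinv_0_lt_compat, pow_lt, lt_0_INR; lia. Qed.

Lemma ZZ_cv : Un_cv ZZ (PI ^ 2 / 6).
Proof.
  assert (Hg : Un_growing ZZ).
  { intros m. unfold ZZ. apply sumn_mono; [apply ZZ_nonneg_term | lia]. }
  assert (Hub : has_ub ZZ).
  { exists (PI ^ 2 / 6). intros x [m ->].
    assert (ZZ m <= ZZ (2 * m)) by (unfold ZZ; apply sumn_mono; [apply ZZ_nonneg_term | lia]).
    rewrite ZZ_double in H.
    destruct (OO_bounds m) as [_ B2].
    assert (OO m <= OO (2 ^ m)) by (apply OO_mono; apply Nat.lt_le_incl, Nat.pow_gt_lin_r; lia).
    lra. }
  destruct (growing_cv ZZ Hg Hub) as [l Hl].
  assert (H2 : Un_cv (fun m => ZZ (2 * m)) l).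
  { intros eps Heps. destruct (Hl eps Heps) as [N HN]. exists N. intros m Hm.
    apply HN. lia. }
  assert (H3 : Un_cv (fun m => ZZ (2 * m) - / 4 * ZZ m) (l - / 4 * l)).
  { apply CV_minus; auto. apply (CV_mult (fun _ => / 4) ZZ). intros eps Heps.
    exists O. intros. unfold Rdist. rewrite Rminus_diag, Rabs_R0. lra. auto. }
  assert (H4 : Un_cv OO (l - / 4 * l)).
  { intros eps Heps. destruct (H3 eps Heps) as [N HN]. exists N. intros m Hm.
    specialize (HN m Hm). rewrite ZZ_double in HN.
    replace (OO m + / 4 * ZZ m - / 4 * ZZ m) with (OO m) in HN by ring. auto. }
  pose proof (UL_sequence _ _ _ H4 OO_cv).
  replace (PI ^ 2 / 6) with l by lra. auto.
Qed.
Notation hh := hyperharmonic.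

Lemma hh_S r n : hh (S r) (S n) = hh (S r) n + hh r (S n).
Proof. reflexivity. Qed.

Lemma hh_S0 r : hh (S r) 0 = 0.
Proof. reflexivity. Qed.

Lemma hh_0S n : hh 0 (S n) = / INR (S n).
Proof. reflexivity. Qed.

Lemma hh_nonneg r n : 0 <= hh r n.
Proof.
  revert n; induction r; intros n.
  - destruct n; [simpl; lra|]. rewrite hh_0S. apply Rlt_le, Rinv_0_lt_compat, lt_0_INR; lia.
  - induction n; [rewrite hh_S0; lra|]. rewrite hh_S. specialize (IHr (S n)). lra.
Qed.

Lemma hh1_mono n : hh 1 n <= hh 1 (S n).
Proof. rewrite (hh_S 0 n). pose proof (hh_nonneg 0 (S n)). lra. Qed.

Lemma rising_pos n r : (0 < n)%nat -> 0 < rising_prod n r.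
Proof.
  intros Hn; induction r; simpl.
  - apply lt_0_INR; auto.
  - apply Rmult_lt_0_compat; auto. apply lt_0_INR; lia.
Qed.

Lemma rising_shift n r : rising_prod (S n) r * INR n = rising_prod n r * INR (n + S r).
Proof.
  induction r; cbn [rising_prod].
  - rewrite S_INR, plus_INR. simpl (INR 1). ring.
  - replace (rising_prod (S n) r * INR (S n + S r) * INR n)
      with (rising_prod (S n) r * INR n * INR (S n + S r)) by ring.
    rewrite IHr. replace (S n + S r)%nat with (n + S (S r))%nat by lia. ring.
Qed.

Lemma rising_ge n r : INR n ^ S r <= rising_prod n r.
Proof.
  induction r; cbn [rising_prod].
  - simpl. lra.
  - rewrite <- tech_pow_Rmult.
    replace (INR n * INR n ^ S r) with (INR n ^ S r * INR n) by ring.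
    apply Rmult_le_compat; auto.
    + apply pow_le, pos_INR.
    + apply pos_INR.
    + apply le_INR; lia.
Qed.

Lemma tele n r : (0 < n)%nat ->
  INR (S r) * / rising_prod n (S r) = / rising_prod n r - / rising_prod (S n) r.
Proof.
  intros Hn.
  pose proof (rising_pos n r Hn). pose proof (rising_pos (S n) r ltac:(lia)).
  pose proof (rising_shift n r).
  assert (0 < INR n) by (apply lt_0_INR; auto).
  assert (0 < INR (n + S r)) by (apply lt_0_INR; lia).
  change (rising_prod n (S r)) with (rising_prod n r * INR (n + S r)).
  assert (E : / rising_prod (S n) r = INR n / (rising_prod n r * INR (n + S r))).
  { rewrite <- H1. field. lra. }
  rewrite E. rewrite plus_INR. field. rewrite <- plus_INR. lra.
Qed.

Definition PP r N := sum_f_R0 (fun k => hh r (S k) / rising_prod (S k) r) N.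

Lemma PP_rec r N :
  INR (S r) * PP (S r) N = PP r N - hh (S r) (S N) / rising_prod (S (S N)) r.
Proof.
  unfold PP. induction N.
  - cbn [sum_f_R0]. rewrite hh_S, hh_S0, Rplus_0_l. unfold Rdiv.
    replace (INR (S r) * (hh r 1 * / rising_prod 1 (S r)))
      with (hh r 1 * (INR (S r) * / rising_prod 1 (S r))) by ring.
    rewrite tele by lia. ring.
  - cbn [sum_f_R0]. rewrite Rmult_plus_distr_l, IHN.
    rewrite (hh_S r (S N)). unfold Rdiv.
    replace (INR (S r) * ((hh (S r) (S N) + hh r (S (S N))) * / rising_prod (S (S N)) (S r)))
      with ((hh (S r) (S N) + hh r (S (S N))) * (INR (S r) * / rising_prod (S (S N)) (S r))) by ring.
    rewrite tele by lia. ring.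
Qed.

Lemma H_bound M m : (0 < M)%nat -> hh 1 m <= INR (Nat.min m M) + INR m / INR M.
Proof.
  intros HM. assert (0 < INR M) by (apply lt_0_INR; auto).
  induction m.
  - rewrite hh_S0. simpl. unfold Rdiv. rewrite Rmult_0_l. lra.
  - rewrite hh_S, hh_0S. rewrite S_INR.
    assert (0 < INR m + 1) by (pose proof (pos_INR m); lra).
    destruct (Nat.le_gt_cases (S m) M).
    + rewrite Nat.min_l by lia. rewrite Nat.min_l in IHm by lia. rewrite S_INR.
      assert (/ (INR m + 1) <= 1).
      { rewrite <- Rinv_1. apply Rinv_le_contravar; [lra|]. pose proof (pos_INR m); lra. }
      assert (0 <= 1 / INR M) by (apply Rlt_le, Rdiv_lt_0_compat; lra).
      replace ((INR m + 1) / INR M) with (INR m / INR M + 1 / INR M) by (field; lra).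
      lra.
    + rewrite Nat.min_r by lia. rewrite Nat.min_r in IHm by lia.
      assert (/ (INR m + 1) <= 1 / INR M).
      { unfold Rdiv. rewrite Rmult_1_l. apply Rinv_le_contravar; [lra|].
        assert (INR M <= INR m) by (apply le_INR; lia). lra. }
      replace ((INR m + 1) / INR M) with (INR m / INR M + 1 / INR M) by (field; lra).
      lra.
Qed.

Lemma hh_bound r m : hh (S r) m <= INR m ^ r * hh 1 m.
Proof.
  revert m; induction r; intros m.
  - simpl. lra.
  - induction m.
    + rewrite !hh_S0. lra.
    + rewrite hh_S. specialize (IHr (S m)).
      pose proof (hh_nonneg 1 m). pose proof (hh1_mono m).
      pose proof (pos_INR m).
      assert (INR m ^ r <= INR (S m) ^ r) by (apply pow_incr; split; [auto| apply le_INR; lia]).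
      assert (0 <= INR m ^ r) by (apply pow_le; auto).
      assert (INR m ^ S r * hh 1 m <= INR (S m) ^ r * INR m * hh 1 (S m)).
      { rewrite <- tech_pow_Rmult.
        replace (INR m * INR m ^ r * hh 1 m) with (INR m * (INR m ^ r * hh 1 m)) by ring.
        replace (INR (S m) ^ r * INR m * hh 1 (S m)) with (INR m * (INR (S m) ^ r * hh 1 (S m))) by ring.
        apply Rmult_le_compat_l; auto. apply Rmult_le_compat; auto. }
      rewrite <- tech_pow_Rmult. rewrite (S_INR m) at 1. lra.
Qed.

Lemma err_cv r : Un_cv (fun N => hh (S r) (S N) / rising_prod (S (S N)) r) 0.
Proof.
  intros eps Heps.
  destruct (INR_unbounded (2 / eps)) as [M HM].
  assert (HM0 : 0 < INR M) by (assert (0 < 2 / eps) by (apply Rdiv_lt_0_compat; lra); lra).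
  assert (HM0' : (0 < M)%nat) by (apply INR_lt; simpl; lra).
  destruct (INR_unbounded (2 * INR M / eps)) as [N0 HN0].
  exists N0. intros N HN. unfold Rdist. rewrite Rminus_0_r.
  set (a := INR (S N)). set (b := INR (S (S N))).
  assert (Ha : 0 < a) by (apply lt_0_INR; lia).
  assert (Hab : a <= b) by (apply le_INR; lia).
  assert (Hb0 : INR N0 < b) by (apply lt_INR; lia).
  pose proof (rising_pos (S (S N)) r ltac:(lia)) as Hr.
  pose proof (rising_ge (S (S N)) r) as Hrg. fold b in Hrg.
  pose proof (hh_nonneg (S r) (S N)) as Hh.
  pose proof (hh_bound r (S N)) as Hb. fold a in Hb.
  pose proof (H_bound M (S N) HM0') as HH. fold a in HH.
  assert (INR (Nat.min (S N) M) <= INR M) by (apply le_INR; lia).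
  pose proof (hh_nonneg 1 (S N)) as H1.
  rewrite Rabs_right by (apply Rle_ge, Rdiv_le_0_compat; lra).
  assert (hh (S r) (S N) / rising_prod (S (S N)) r <= hh 1 (S N) / b).
  { apply Rle_trans with (a ^ r * hh 1 (S N) / b ^ S r).
    - unfold Rdiv. apply Rmult_le_compat; auto.
      + apply Rlt_le, Rinv_0_lt_compat; auto.
      + apply Rinv_le_contravar; auto. apply pow_lt; lra.
    - rewrite <- tech_pow_Rmult.
      assert (a ^ r <= b ^ r) by (apply pow_incr; lra).
      assert (0 < b ^ r) by (apply pow_lt; lra).
      unfold Rdiv. rewrite Rinv_mult.
      replace (a ^ r * hh 1 (S N) * (/ b * / b ^ r)) with ((a ^ r / b ^ r) * (hh 1 (S N) * / b)) by (field; lra).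
      rewrite <- (Rmult_1_l (hh 1 (S N) * / b)) at 2.
      apply Rmult_le_compat_r.
      + apply Rmult_le_pos; auto. apply Rlt_le, Rinv_0_lt_compat; lra.
      + apply Rmult_le_reg_r with (b ^ r); auto. field_simplify; lra. }
  assert (hh 1 (S N) / b <= INR M / b + 1 / INR M).
  { apply Rle_trans with ((INR M + a / INR M) / b).
    - unfold Rdiv. apply Rmult_le_compat_r; [apply Rlt_le, Rinv_0_lt_compat; lra|]. unfold Rdiv in HH. lra.
    - replace ((INR M + a / INR M) / b) with (INR M / b + (a / b) * (1 / INR M)) by (field; lra).
      assert (a / b <= 1) by (apply Rmult_le_reg_r with b; [lra|]; field_simplify; lra).
      assert (0 < 1 / INR M) by (apply Rdiv_lt_0_compat; lra).
      nra. }
  assert (INR M / b < eps / 2).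
  { apply Rmult_lt_reg_r with (2 * b / eps). apply Rdiv_lt_0_compat; lra.
    replace (INR M / b * (2 * b / eps)) with (2 * INR M / eps) by (field; lra).
    replace (eps / 2 * (2 * b / eps)) with b by (field; lra). lra. }
  assert (1 / INR M < eps / 2).
  { apply Rmult_lt_reg_r with (2 * INR M / eps). apply Rdiv_lt_0_compat; lra.
    replace (1 / INR M * (2 * INR M / eps)) with (2 / eps) by (field; lra).
    replace (eps / 2 * (2 * INR M / eps)) with (INR M) by (field; lra). lra. }
  lra.
Qed.

Lemma PP_cv r : Un_cv (PP r) (PI ^ 2 / (6 * INR (Factorial.fact r))).
Proof.
  induction r.
  - intros eps Heps. destruct (ZZ_cv eps Heps) as [N HN]. exists N. intros n Hn.
    replace (PP 0 n) with (ZZ (S n)).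
    + replace (PI ^ 2 / (6 * INR (Factorial.fact 0))) with (PI ^ 2 / 6) by (simpl; field).
      apply HN; lia.
    + unfold PP, ZZ. rewrite sum_f_R0_sumn. apply sumn_ext. intros k _.
      rewrite hh_0S. cbn [rising_prod]. rewrite Nat.add_1_r.
      assert (0 < INR (S k)) by (apply lt_0_INR; lia). field. lra.
  - assert (HF : 0 < INR (Factorial.fact r)) by (apply INR_fact_lt_0).
    assert (HS : 0 < INR (S r)) by (apply lt_0_INR; lia).
    assert (E : forall N, PP (S r) N =
      / INR (S r) * (PP r N - hh (S r) (S N) / rising_prod (S (S N)) r)).
    { intros N. rewrite <- PP_rec. field. lra. }
    assert (Hc : Un_cv (fun N => / INR (S r) * (PP r N - hh (S r) (S N) / rising_prod (S (S N)) r))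
                  (/ INR (S r) * (PI ^ 2 / (6 * INR (Factorial.fact r)) - 0))).
    { apply (CV_mult (fun _ => / INR (S r))).
      - intros eps Heps. exists O. intros. unfold Rdist. rewrite Rminus_diag, Rabs_R0. lra.
      - apply CV_minus; auto. apply err_cv. }
    intros eps Heps. destruct (Hc eps Heps) as [N HN]. exists N. intros n Hn.
    rewrite E. replace (PI ^ 2 / (6 * INR (Factorial.fact (S r))))
      with (/ INR (S r) * (PI ^ 2 / (6 * INR (Factorial.fact r)) - 0)).
    + apply HN; auto.
    + change (Factorial.fact (S r)) with (S r * Factorial.fact r)%nat. rewrite mult_INR. field. lra.
Qed.

Theorem proposition6 (r : nat) :
  infinite_sum
    (fun k : nat => hyperharmonic r (S k) / rising_prod (S k) r)
    (PI ^ 2 / (6 * INR (Factorial.fact r))).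
Proof. exact (PP_cv r). Qed.
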